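(* Let $K$ be a field, $s\ge 2$, and $S=K[t_1,\ldots,t_s]$ with each $t_i$ of degree $1$. Let $\mathcal{L}\subset\mathbb{Z}^s$ be a lattice such that the lattice ideal $I(\mathcal{L})$ is graded (i.e. generated by homogeneous polynomials) and $\dim S/I(\mathcal{L})=1$. Then $$\deg\, S/I(\mathcal{L})=|T(\mathbb{Z}^s/\mathcal{L})|,$$ where $T(\mathbb{Z}^s/\mathcal{L})$ is the torsion subgroup of $\mathbb{Z}^s/\mathcal{L}$.
   Context: A lattice is a subgroup $\mathcal{L}$ of $\mathbb{Z}^s$. For $a\in\mathbb{Z}^s$ write $a=a^+-a^-$ with $a^+,a^-\in\mathbb{N}^s$ of disjoint supports, and $t^c=t_1^{c_1}\cdots t_s^{c_s}$ for $c\in\mathbb{N}^s$. The lattice ideal of $\mathcal{L}$ is $I(\mathcal{L})=(\{t^{a^+}-t^{a^-}: a\in\mathcal{L}\})\subset S$. The torsion subgroup $T(M)$ of an abelian group $M$ is the set of $x\in M$ with $px=0$ for some positive integer $p$. For a graded ideal $I\subset S$, with $S_d$ the homogeneous polynomials of degree $d$ (with $0$) and $I_d=I\cap S_d$, the Hilbert function is $H_I(d)=\dim_K S_d/I_d$; there is a unique polynomial $h_I(t)=c_kt^k+\cdots$ (the Hilbert polynomial, of degree $k$, with $k=-1$ meaning $h_I=0$) with $h_I(d)=H_I(d)$ for $d\gg0$; $\dim S/I=k+1$ (Krull dimension). The degree $\deg S/I$ is $c_k\,k!$ if $k\ge 0$ and $\dim_K(S/I)$ if $k=-1$. *)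

(* Defs.v *)
From HB Require Import structures.
From mathcomp Require Import all_boot all_order all_algebra.
From mathcomp Require Import mpoly.
Set Implicit Arguments. Unset Strict Implicit. Unset Printing Implicit Defensive.
Import Order.TTheory GRing.Theory Num.Theory.
Local Open Scope ring_scope.

Section Defs.
Variables (K : fieldType) (s : nat).

Definition zvec := 'I_s -> int.

Definition is_lattice (L : zvec -> Prop) : Prop :=
  [/\ L (fun _ => 0),
      forall a b, L a -> L b -> L (fun i => a i + b i)
    & forall a, L a -> L (fun i => - a i)].

(* a = a^+ - a^-, with disjoint supports *)
Definition pos_part (z : int) : nat :=
  match z with Posz n => n | Negz _ => 0%N end.
Definition neg_part (z : int) : nat :=
  match z with Posz _ => 0%N | Negz n => n.+1 end.

Definition mono_pos (a : zvec) : 'X_{1..s} := [multinom pos_part (a i) | i < s].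
Definition mono_neg (a : zvec) : 'X_{1..s} := [multinom neg_part (a i) | i < s].

Definition binom_of (a : zvec) : {mpoly K[s]} := 'X_[mono_pos a] - 'X_[mono_neg a].

Definition ideal_gen (G : {mpoly K[s]} -> Prop) (p : {mpoly K[s]}) : Prop :=
  exists n (q g : 'I_n -> {mpoly K[s]}),
    (forall i, G (g i)) /\ p = \sum_(i < n) q i * g i.

Definition lattice_ideal (L : zvec -> Prop) : {mpoly K[s]} -> Prop :=
  ideal_gen (fun f => exists a, L a /\ f = binom_of a).

(* homogeneous of degree d (0 is homogeneous of every degree) *)
Definition homog_deg (d : nat) (p : {mpoly K[s]}) : Prop :=
  forall m, m \in msupp p -> mdeg m = d.

Definition is_homogeneous (p : {mpoly K[s]}) : Prop := exists d, homog_deg d p.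

Definition graded_ideal (I : {mpoly K[s]} -> Prop) : Prop :=
  exists G : {mpoly K[s]} -> Prop,
    (forall g, G g -> is_homogeneous g) /\ (forall p, I p <-> ideal_gen G p).

(* there are n elements satisfying P whose classes are K-linearly
   independent in S/I, i.e. dim_K (span P + I)/I >= n *)
Definition quot_indep (I : {mpoly K[s]} -> Prop) (P : {mpoly K[s]} -> Prop)
  (n : nat) : Prop :=
  exists f : 'I_n -> {mpoly K[s]},
    (forall i, P (f i)) /\
    (forall c : 'I_n -> K, I (\sum_(i < n) c i *: f i) -> forall i, c i = 0).

(* dim_K S_d / I_d = n *)
Definition hilbert_fn (I : {mpoly K[s]} -> Prop) (d n : nat) : Prop :=
  quot_indep I (homog_deg d) n /\ ~ quot_indep I (homog_deg d) n.+1.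

(* dim_K S / I = n *)
Definition quot_dim (I : {mpoly K[s]} -> Prop) (n : nat) : Prop :=
  quot_indep I (fun _ => True) n /\ ~ quot_indep I (fun _ => True) n.+1.

Definition hilbert_poly (I : {mpoly K[s]} -> Prop) (h : {poly rat}) : Prop :=
  exists d0, forall d, (d0 <= d)%N ->
    exists n, hilbert_fn I d n /\ h.[d%:R] = n%:R.

(* Krull dimension of S/I = deg h + 1 = size h (0 if h = 0) *)
Definition krull_dim (I : {mpoly K[s]} -> Prop) (k : nat) : Prop :=
  exists h, hilbert_poly I h /\ size h = k.

Definition quot_degree (I : {mpoly K[s]} -> Prop) (e : rat) : Prop :=
  exists h, hilbert_poly I h /\
   ((0 < size h)%N /\ e = lead_coef h * ((size h).-1)`!%:R
    \/ h = 0 /\ exists n, quot_dim I n /\ e = n%:R).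

End Defs.

(* torsion subgroup of Z^s / L has exactly n elements:
   n pairwise non-congruent torsion classes exhausting all torsion classes *)
Definition is_torsion_mod (s : nat) (L : zvec s -> Prop) (x : zvec s) : Prop :=
  exists p : nat, (0 < p)%N /\ L (fun i => p%:Z * x i).

Definition congr_mod (s : nat) (L : zvec s -> Prop) (x y : zvec s) : Prop :=
  L (fun i => x i - y i).

Definition torsion_card (s : nat) (L : zvec s -> Prop) (n : nat) : Prop :=
  exists f : 'I_n -> zvec s,
    [/\ forall i, is_torsion_mod L (f i),
        forall i j, congr_mod L (f i) (f j) -> i = j
      & forall x, is_torsion_mod L x -> exists i, congr_mod L x (f i)].

(* Main.v *)
Require Import Defs.
From HB Require Import structures.
From mathcomp Require Import all_boot all_order all_algebra.
From mathcomp Require Import mpoly.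
From mathcomp.multinomials Require Import ssrcomplements.
From mathcomp Require Import zify.
From Stdlib Require Import ClassicalEpsilon FunctionalExtensionality.
Set Implicit Arguments. Unset Strict Implicit. Unset Printing Implicit Defensive.
Import Order.TTheory GRing.Theory Num.Theory.
Local Open Scope ring_scope.

Definition pb (P : Prop) : bool := if excluded_middle_informative P then true else false.
Lemma pbP P : reflect P (pb P).
Proof. by rewrite /pb; case: excluded_middle_informative => h; constructor. Qed.

Section Phi.
Variables (K : fieldType) (s : nat).
Implicit Types (p q : {mpoly K[s]}) (P : pred 'X_{1..s}).

Definition Phi P p : K := \sum_(m <- msupp p) (if P m then p@_m else 0).

Lemma PhiE P p i : (msize p <= i)%N ->
  Phi P p = \sum_(m : 'X_{1..s < i}) (if P m then p@_m else 0).
Proof.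
move=> le_pi; set I : subFinType _ := 'X_{1..s < i}.
rewrite /Phi (big_mksub I) ?msupp_uniq //=; first last.
  by move=> x /msize_mdeg_lt /leq_trans; apply.
rewrite big_rmcond //= => j /memN_msupp_eq0 ->.
by case: (P _).
Qed.

Lemma PhiDZ P c p q : Phi P (c *: p + q) = c * Phi P p + Phi P q.
Proof.
set i := (msize p + msize q + msize (c *: p + q))%N.
rewrite !(@PhiE _ _ i) /i; try lia.
rewrite mulr_sumr -big_split /=; apply: eq_bigr => m _.
rewrite mcoeffD mcoeffZ; by case: (P m); rewrite // mulr0 addr0.
Qed.

Lemma Phi0 P : Phi P 0 = 0.
Proof. by rewrite /Phi msupp0 big_nil. Qed.

Lemma PhiD P p q : Phi P (p + q) = Phi P p + Phi P q.
Proof. by have := PhiDZ P 1 p q; rewrite scale1r mul1r. Qed.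

Lemma PhiZ P c p : Phi P (c *: p) = c * Phi P p.
Proof. by have := PhiDZ P c p 0; rewrite addr0 Phi0 addr0. Qed.

Lemma PhiN P p : Phi P (- p) = - Phi P p.
Proof. by rewrite -scaleN1r PhiZ mulN1r. Qed.

Lemma PhiB P p q : Phi P (p - q) = Phi P p - Phi P q.
Proof. by rewrite PhiD PhiN. Qed.

Lemma Phi_sum P n (F : 'I_n -> {mpoly K[s]}) :
  Phi P (\sum_(i < n) F i) = \sum_(i < n) Phi P (F i).
Proof.
elim: n F => [|n IH] F; first by rewrite !big_ord0 Phi0.
by rewrite !big_ord_recr /= PhiD IH.
Qed.

Lemma PhiX P m : Phi P 'X_[m] = if P m then 1 else 0.
Proof. by rewrite /Phi msuppX big_seq1 mcoeffX eqxx. Qed.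

Lemma Phi_ext P Q p : {in msupp p, P =1 Q} -> Phi P p = Phi Q p.
Proof. by move=> h; rewrite /Phi; apply: eq_big_seq => m /h ->. Qed.

Lemma Phi_nil P p : {in msupp p, forall m, P m = false} -> Phi P p = 0.
Proof. by move=> h; rewrite /Phi big1_seq // => m /andP[_ /h ->]. Qed.

Lemma Phi_shift P w p : Phi P ('X_[w] * p) = Phi (fun m => P (w + m)%MM) p.
Proof.
rewrite /Phi mulrC (perm_big _ (msuppMX p w)) big_map.
by apply: eq_bigr => m _; rewrite mcoeffMX.
Qed.
End Phi.
Section Lat.
Variables (K : fieldType) (s : nat) (L : zvec s -> Prop) (HL : is_lattice L).

Local Notation I := (lattice_ideal (K:=K) L).

Definition zv (m : 'X_{1..s}) : zvec s := fun i => (m i)%:Z.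
Definition cg (x y : zvec s) := congr_mod L x y.
Definition cls (z : zvec s) : pred 'X_{1..s} := fun m => pb (cg (zv m) z).

Lemma Lext a b : L a -> (forall i, a i = b i) -> L b.
Proof. by move=> La h; have <- : a = b by apply: functional_extensionality. Qed.

Lemma cg_refl x : cg x x.
Proof. case: HL => h0 _ _; apply: Lext h0 _ => i; by rewrite subrr. Qed.

Lemma cg_sym x y : cg x y -> cg y x.
Proof. case: HL => _ _ hN h; apply: Lext (hN _ h) _ => i; by rewrite opprB. Qed.

Lemma cg_trans x y z : cg x y -> cg y z -> cg x z.
Proof.
case: HL => _ hD _ h1 h2; apply: Lext (hD _ _ h1 h2) _ => i.
by rewrite addrA subrK.
Qed.

Lemma cls_inv z m m' : cg (zv m) (zv m') -> cls z m = cls z m'.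
Proof.
move=> h; rewrite /cls; apply/idP/idP => /pbP H; apply/pbP.
  exact: cg_trans (cg_sym h) H.
exact: cg_trans h H.
Qed.

Lemma cls_eq z z' : cg z z' -> cls z =1 cls z'.
Proof.
move=> h m; rewrite /cls; apply/idP/idP => /pbP H; apply/pbP.
  exact: cg_trans H h.
exact: cg_trans H (cg_sym h).
Qed.

Section IdealGen.
Variable G : {mpoly K[s]} -> Prop.

Lemma ideal_gen0 : ideal_gen G 0.
Proof. by exists 0%N, (fun _ => 0), (fun _ => 0); split => [[]|]; rewrite ?big_ord0. Qed.

Lemma ideal_gen_gen g : G g -> ideal_gen G g.
Proof.
move=> Gg; exists 1%N, (fun _ => 1), (fun _ => g); split => [//|].
by rewrite big_ord1 mul1r.
Qed.

Lemma ideal_genDZ c p q : ideal_gen G p -> ideal_gen G q -> ideal_gen G (c *: p + q).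
Proof.
move=> [n1 [q1 [g1 [G1 ->]]]] [n2 [q2 [g2 [G2 ->]]]].
exists (n1 + n2)%N,
  (fun i => match split i with inl j => c *: q1 j | inr j => q2 j end),
  (fun i => match split i with inl j => g1 j | inr j => g2 j end).
split; first by move=> i; case: (split i).
rewrite big_split_ord /=.
have hl : forall j, split (lshift n2 j) = inl j := fun j => unsplitK (inl j).
have hr : forall j, split (rshift n1 j) = inr j := fun j => unsplitK (inr j).
congr (_ + _).
  rewrite scaler_sumr; apply: eq_bigr => j _; by rewrite hl scalerAl.
by apply: eq_bigr => j _; rewrite hr.
Qed.

Lemma ideal_genM r p : ideal_gen G p -> ideal_gen G (r * p).
Proof.
move=> [n [q [g [Gg ->]]]]; exists n, (fun i => r * q i), g; split => //.
by rewrite mulr_sumr; apply: eq_bigr => i _; rewrite mulrA.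
Qed.

Lemma Phi_sumS P (T : Type) (r : seq T) (F : T -> {mpoly K[s]}) :
  Phi P (\sum_(i <- r) F i) = \sum_(i <- r) Phi P (F i).
Proof. elim: r => [|x r IH]; by rewrite ?big_nil ?Phi0 // !big_cons PhiD IH. Qed.

Lemma kill_gen P : (forall w g, G g -> Phi P ('X_[w] * g) = 0) ->
  forall p, ideal_gen G p -> Phi P p = 0.
Proof.
move=> h p [n [q [g [Gg ->]]]]; rewrite Phi_sum big1 // => i _.
rewrite [q i]mpolyE mulr_suml Phi_sumS big1_seq // => m _.
by rewrite -scalerAl PhiZ h ?mulr0.
Qed.
End IdealGen.

Lemma posneg z : (pos_part z)%:Z - (neg_part z)%:Z = z.
Proof. case: z => n /=; first by rewrite subr0. by rewrite sub0r NegzE. Qed.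

Definition inv (P : pred 'X_{1..s}) := forall m m', cg (zv m) (zv m') -> P m = P m'.

Lemma kill_I P : inv P -> forall p, I p -> Phi P p = 0.
Proof.
move=> iP; apply: kill_gen => w g [a [La ->]].
rewrite /binom_of mulrBr -!mpolyXD PhiB !PhiX.
rewrite (iP _ (w + mono_neg a)%MM) ?subrr //.
apply: Lext La _ => i; rewrite /zv !mnmDE !mnmE !PoszD.
by rewrite opprD addrACA subrr add0r posneg.
Qed.

Lemma cls_invP z : inv (cls z).
Proof. by move=> m m' h; apply: cls_inv. Qed.

Lemma I_gen a : L a -> I (@binom_of K s a).
Proof. by move=> La; apply: ideal_gen_gen; exists a. Qed.

Lemma I_mul r p : I p -> I (r * p).
Proof. exact: ideal_genM. Qed.

Hypothesis Hgr : graded_ideal I.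

Lemma kill_graded P e : inv P -> forall p, I p ->
  Phi (fun m => P m && (mdeg m == e)) p = 0.
Proof.
move=> iP p Ip; case: Hgr => G [hG hGI].
have GI : forall g, G g -> I g by move=> g Gg; apply/hGI/ideal_gen_gen.
move/hGI: Ip; apply: kill_gen => w g Gg.
case: (hG g Gg) => dg hdg.
rewrite Phi_shift.
rewrite (@Phi_ext _ _ _ (fun m => P (w + m)%MM && (mdeg w + dg == e)%N)); last first.
  by move=> m /hdg hm; rewrite mdegD hm.
case: (mdeg w + dg == e)%N.
  rewrite (@Phi_ext _ _ _ (fun m => P (w + m)%MM)); last by move=> m _; rewrite andbT.
  by rewrite -Phi_shift kill_I //; apply: I_mul; apply: GI.
by apply: Phi_nil => m _; rewrite andbF.
Qed.

Lemma zv_deg m : (mdeg m)%:Z = \sum_i zv m i.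
Proof. by rewrite mdegE (big_morph Posz PoszD (erefl _)). Qed.

Lemma LH a : L a -> \sum_i a i = 0.
Proof.
move=> La.
have P0 : Phi (fun m => cls (zv (mono_pos a)) m && (mdeg m == mdeg (mono_pos a)))
   (@binom_of K s a) = 0.
  by apply: kill_graded; [apply: cls_invP | apply: I_gen].
move: P0; rewrite /binom_of PhiB !PhiX eqxx andbT.
have -> : cls (zv (mono_pos a)) (mono_pos a) by apply/pbP/cg_refl.
have -> : cls (zv (mono_pos a)) (mono_neg a).
  apply/pbP; case: HL => _ _ hN; apply: Lext (hN _ La) _ => i.
  by rewrite /zv !mnmE -opprB posneg.
case: eqP => /= [hd _|_]; last by rewrite subr0 => /eqP; rewrite oner_eq0.
have : (mdeg (mono_pos a))%:Z - (mdeg (mono_neg a))%:Z = 0 by rewrite hd subrr.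
rewrite !zv_deg -sumrB => h; rewrite -[RHS]h; apply: eq_bigr => i _.
by rewrite /zv !mnmE posneg.
Qed.

Lemma cg_deg m m' : cg (zv m) (zv m') -> mdeg m = mdeg m'.
Proof.
move/LH; rewrite sumrB -!zv_deg => /eqP; rewrite subr_eq0 => /eqP [].
done.
Qed.

Lemma pn_sub x y : pos_part (x%:Z - y%:Z) = (x - y)%N /\ neg_part (x%:Z - y%:Z) = (y - x)%N.
Proof.
case: (leqP y x) => h.
  rewrite subzn //; split => //=; lia.
have e : (y - x)%N = (y - x).-1.+1 by rewrite prednK // subn_gt0.
have -> : x%:Z - y%:Z = Negz (y - x).-1 by rewrite NegzE -e -opprB subzn // ltnW.
split => /=; last by rewrite -e.
lia.
Qed.

Lemma I_diff m0 m1 : cg (zv m0) (zv m1) -> I ('X_[m0] - 'X_[m1]).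
Proof.
move=> h.
set a := fun i => zv m0 i - zv m1 i.
set w := [multinom minn (m0 i) (m1 i) | i < s].
have e0 : m0 = (w + mono_pos a)%MM.
  apply/mnmP => i; rewrite mnmDE !mnmE /a /zv.
  by case: (pn_sub (m0 i) (m1 i)) => -> _; lia.
have e1 : m1 = (w + mono_neg a)%MM.
  apply/mnmP => i; rewrite mnmDE !mnmE /a /zv.
  by case: (pn_sub (m0 i) (m1 i)) => _ ->; lia.
rewrite e0 e1 !mpolyXD -mulrBr; apply: I_mul; exact: I_gen.
Qed.

Lemma kern n p : (size (msupp p) <= n)%N -> (forall m0, Phi (cls (zv m0)) p = 0) -> I p.
Proof.
elim: n p => [|n IH] p hs hP.
  have : msupp p = [::] by case: (msupp p) hs.
  by move/msuppnil0 ->; apply: ideal_gen0.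
case E: (msupp p) => [|m0 r]; first by rewrite (msuppnil0 E); apply: ideal_gen0.
have m0in : m0 \in msupp p by rewrite E mem_head.
have nz : p@_m0 != 0 by rewrite -mcoeff_msupp.
have [m1 m1in /andP[ne cl]] : exists2 m1, m1 \in msupp p & (m1 != m0) && cls (zv m0) m1.
  apply/hasP; apply/negPn/negP => hn; move: (hP m0).
  rewrite /Phi (bigD1_seq m0) ?msupp_uniq //= big1_seq.
    have -> : cls (zv m0) m0 by apply/pbP/cg_refl.
    by rewrite addr0 => /eqP; rewrite (negbTE nz).
  move=> m /andP[ne' min]; case c: (cls _ m) => //.
  by case/hasP: hn; exists m => //; rewrite ne' c.
have cgm : cg (zv m1) (zv m0) by apply/pbP.
set c := p@_m0.
set p' := p - c *: ('X_[m0] - 'X_[m1]).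
have -> : p = c *: ('X_[m0] - 'X_[m1]) + p' by rewrite /p' addrC subrK.
apply: ideal_genDZ; first exact: I_diff (cg_sym cgm).
apply: IH.
  have sub : {subset msupp p' <= rem m0 (msupp p)}.
    move=> m hm; rewrite mem_rem_uniq ?msupp_uniq // inE; apply/andP; split.
      apply: contraTneq hm => ->; rewrite mcoeff_msupp /p' mcoeffB mcoeffZ mcoeffB.
      by rewrite !mcoeffX eqxx (negbTE ne) subr0 mulr1 subrr eqxx.
    move/msuppB_le: hm; rewrite mem_cat => /orP[//|/msuppZ_le/msuppB_le].
    by rewrite mem_cat !msuppX !mem_seq1 => /orP[]/eqP->.
  have := uniq_leq_size (msupp_uniq p') sub.
  by rewrite size_rem // E /= => /leq_trans; apply; rewrite E in hs.
move=> m; rewrite /p' PhiB PhiZ PhiB !PhiX (cls_inv _ (cg_sym cgm)).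
by rewrite subrr mulr0 subr0 hP.
Qed.

Lemma kern' p : (forall m0, Phi (cls (zv m0)) p = 0) -> I p.
Proof. exact: kern (leqnn _). Qed.

End Lat.

Lemma qi_restr (K : fieldType) (s : nat) (I P : {mpoly K[s]} -> Prop) n m :
  quot_indep I P n -> (m <= n)%N -> quot_indep I P m.
Proof.
case: m => [|m] hq hmn.
  by exists (fun _ => 0); split => [[]|c _ []].
case: n hq hmn => // k [f [Pf hf]] hmk.
exists (fun i : 'I_m.+1 => f (inord i)); split => [i0|c hc i0]; first exact: Pf.
pose c' := fun j : 'I_k.+1 => if (j < m.+1)%N then c (inord j) else 0.
have E : \sum_(j < k.+1) c' j *: f j = \sum_(i < m.+1) c i *: f (inord i).
  rewrite [RHS](eq_bigr (fun i : 'I_m.+1 => c (inord i) *: f (inord i))); last first.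
    by move=> i _; rewrite inord_val.
  rewrite (big_ord_widen _ (fun i => c (inord i) *: f (inord i)) hmk) [RHS]big_mkcond /=.
  apply: eq_bigr => j _; rewrite /c' inord_val; case: ifP => _; by rewrite ?scale0r.
have := hf c' _ (inord i0); rewrite E => /(_ hc).
by rewrite /c' inordK ?(leq_trans (ltn_ord i0) hmk) // ltn_ord inord_val.
Qed.

Lemma qi_le (K : fieldType) (s : nat) (I P : {mpoly K[s]} -> Prop) k n0 :
  quot_indep I P k -> ~ quot_indep I P n0.+1 -> (k <= n0)%N.
Proof.
move=> hk hn; rewrite leqNgt; apply/negP => lt; apply: hn.
exact: qi_restr hk lt.
Qed.

Section Main.
Variables (K : fieldType) (s : nat) (L : zvec s -> Prop) (HL : is_lattice L).
Local Notation I := (lattice_ideal (K:=K) L).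
Hypothesis Hgr : graded_ideal I.
Hypothesis hs : (2 <= s)%N.
Variables (n0 d0 : nat).
Hypothesis H0 : forall d, (d0 <= d)%N -> hilbert_fn I d n0.

Lemma lemA k (x : 'I_k -> zvec s) : (forall j, \sum_i x j i = 0) ->
  (forall j l, cg L (x j) (x l) -> j = l) -> (k <= n0)%N.
Proof.
move=> hsum hinj.
set M := (\max_(j < k) \max_(i < s) `|x j i|)%N.
set c := (M + d0)%N.
have hM : forall j i, (`|x j i| <= M)%N.
  move=> j i; rewrite /M; apply: (leq_trans _ (leq_bigmax j)); exact: (leq_bigmax i).
pose u j : 'X_{1..s} := [multinom absz (x j i + c%:Z)%R | i < s].
have zu : forall j i, zv (u j) i = x j i + c%:Z.
  move=> j i; rewrite /zv mnmE; have := hM j i; rewrite /c; lia.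
have du : forall j, mdeg (u j) = (s * c)%N.
  move=> j; apply/eqP; rewrite -eqz_nat zv_deg.
  rewrite (eq_bigr _ (fun i _ => zu j i)) big_split /= hsum add0r sumr_const card_ord.
  by rewrite -mulr_natr natz -PoszM mulnC.
have cgu : forall j1 l, cg L (zv (u j1)) (zv (u l)) -> cg L (x j1) (x l).
  move=> j1 l; rewrite /cg /congr_mod => h; apply: Lext h _ => i; rewrite !zu; by rewrite opprD addrACA subrr addr0.
have hq : quot_indep (lattice_ideal (K:=K) L) (homog_deg (s * c)) k.
  exists (fun j => 'X_[u j]); split.
    by move=> j m; rewrite msuppX mem_seq1 => /eqP ->.
  move=> cf hI l.
  have := kill_I (@cls_invP _ L HL (zv (u l))) hI.
  rewrite Phi_sum (bigD1 l) //= big1 => [|j ne].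
    rewrite addr0 PhiZ PhiX.
    have -> : cls L (zv (u l)) (u l) by apply/pbP; apply: cg_refl HL _.
    by rewrite mulr1.
  rewrite PhiZ PhiX; case: ifP => [/pbP/cgu/hinj e|]; last by rewrite mulr0.
  by rewrite e eqxx in ne.
apply: qi_le hq _; case: (H0 (d := (s * c)%N) _) => // ; rewrite /c; nia.
Qed.

Lemma sumz_tors x : is_torsion_mod L x -> \sum_i x i = 0.
Proof.
move=> [p [p0 Lp]]; have := LH HL Hgr Lp; rewrite -mulr_sumr => /eqP.
by rewrite mulf_eq0 eqz_nat eqn0Ngt p0 /= => /eqP.
Qed.

Lemma tors_sumz x : \sum_i x i = 0 -> is_torsion_mod L x.
Proof.
move=> hx; apply: Classical_Prop.NNPP => nt.
pose g (i : 'I_n0.+1) : zvec s := fun t => (i%:Z) * x t.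
suff : (n0.+1 <= n0)%N by rewrite ltnn.
apply: (@lemA _ g).
  by move=> j; rewrite /g -mulr_sumr hx mulr0.
have key : forall i l : 'I_n0.+1, (i < l)%N -> ~ cg L (g l) (g i).
  move=> i l il; rewrite /cg /congr_mod => h; apply: nt; exists (l - i)%N; split; first by rewrite subn_gt0.
  apply: Lext h _ => t; rewrite /g -mulrBl subzn //; exact: ltnW.
move=> i l h; case: (ltngtP i l) => il.
- by case: (key _ _ il (cg_sym HL h)).
- by case: (key _ _ il h).
- exact: val_inj.
Qed.

Lemma lemB k (y : 'I_k -> zvec s) :
  (forall x, \sum_i x i = 0 -> exists i, cg L x (y i)) -> (n0 <= k)%N.
Proof.
move=> cov; rewrite leqNgt; apply/negP => hk.
case: (H0 (leqnn d0)) => hq _.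
have [f [hf indep]] := qi_restr hq hk.
have s0 : (0 < s)%N by apply: leq_trans hs.
pose t0 : 'I_s := Ordinal s0.
pose z i : zvec s := fun t => y i t + (t == t0)%:R * d0%:Z.
have cover : forall m, mdeg m = d0 -> exists i, cg L (zv m) (z i).
  move=> m hm; pose x := fun t => zv m t - (t == t0)%:R * d0%:Z.
  have [i hi] : exists i, cg L x (y i).
    apply: cov; rewrite /x sumrB -zv_deg hm (bigD1 t0) //= mul1r big1 ?addr0 ?subrr //.
    by move=> t /negbTE ->; rewrite mul0r.
  exists i; move: hi; rewrite /cg /congr_mod => hi; apply: Lext hi _ => t; rewrite /x /z /zv; rewrite opprD addrA addrAC //.
pose A : 'M[K]_(k.+1, k) := \matrix_(j, i) Phi (cls L (z i)) (f j).
have nrf : ~~ row_free A.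
  apply/negP => /eqP h; have := rank_leq_col A; by rewrite h ltnn.
move/negP: nrf; apply; apply: inj_row_free => v vA.
apply: Classical_Prop.NNPP => vn0; apply: vn0.
pose cf j := v 0 j.
have Ip : I (\sum_j cf j *: f j).
  apply: (kern' HL) => //= m0; rewrite Phi_sum.
  under eq_bigr do rewrite PhiZ.
  case: (eqVneq (mdeg m0) d0) => hd.
    have [i hi] := cover m0 hd.
    have -> : \sum_j cf j * Phi (cls L (zv m0)) (f j) = (v *m A) 0 i.
      rewrite !mxE; apply: eq_bigr => j _; rewrite mxE; congr (_ * _).
      by apply: Phi_ext => m _; apply: (cls_eq HL).
    by rewrite vA mxE.
  rewrite big1 // => j _; rewrite Phi_nil ?mulr0 // => m hm.
  apply/negP => /pbP /(cg_deg HL Hgr); rewrite (hf j m hm) => e.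
  by rewrite e eqxx in hd.
by apply/rowP => j; rewrite mxE; apply: (indep cf Ip).
Qed.

End Main.

Theorem theorem3p13 (K : fieldType) (s : nat) (hs : (2 <= s)%N)
  (L : zvec s -> Prop) (HL : is_lattice L)
  (Hgr : graded_ideal (lattice_ideal (K:=K) L))
  (Hdim : krull_dim (lattice_ideal (K:=K) L) 1) :
  exists n : nat, torsion_card L n /\ quot_degree (lattice_ideal (K:=K) L) n%:R.
Proof.
case: Hdim => h [[d0 Hh] hsz].
have hC : h = (h`_0)%:P by apply: size1_polyC; rewrite hsz.
have hCx : forall x, h.[x] = h`_0.
  by move=> x; rewrite [in LHS]hC; exact: hornerC.
have [n0 [hf0 hv0]] := Hh d0 (leqnn d0).
have H0 : forall d, (d0 <= d)%N -> hilbert_fn (lattice_ideal (K:=K) L) d n0.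
  move=> d hd; have [n [hfn hvn]] := Hh d hd.
  have : n%:R = n0%:R :> rat.
    by rewrite -hvn -hv0 !hCx.
  by move/eqP; rewrite eqr_nat => /eqP <-.
exists n0; split; last first.
  exists h; split; first by exists d0.
  left; split; first by rewrite hsz.
  by rewrite hsz /= mulr1 lead_coefE hsz /= -hv0 hCx.
pose Q k := exists y : 'I_k -> zvec s,
  (forall j, \sum_i y j i = 0) /\ (forall j l, cg L (y j) (y l) -> j = l).
have exQ : exists k, pb (Q k).
  by exists 0%N; apply/pbP; exists (fun _ _ => 0); split => -[].
have ubQ : forall k, pb (Q k) -> (k <= n0)%N.
  by move=> k /pbP [y [h1 h2]]; apply: (lemA HL hs H0 h1 h2).
case: (ex_maxnP exQ ubQ) => k /pbP [y [ys yi]] kmax.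
have cov : forall x, \sum_i x i = 0 -> exists i, cg L x (y i).
  move=> x hx; apply: Classical_Prop.NNPP => nc.
  suff : (k.+1 <= k)%N by rewrite ltnn.
  apply: kmax; apply/pbP.
  exists (fun i => if unlift ord_max i is Some j then y j else x); split.
    by move=> i; case: (unliftP ord_max i) => [j _|_].
  move=> i l; case: (unliftP ord_max i) => [j ->|->];
    case: (unliftP ord_max l) => [j' ->|->] //.
  - by move/yi ->.
  - by move=> hh; case: nc; exists j; apply: (cg_sym HL).
  - by move=> hh; case: nc; exists j'.
have ek : k = n0.
  apply/eqP; rewrite eqn_leq (ubQ k) //=; last by apply/pbP; exists y.
  exact: (lemB HL Hgr hs H0 cov).
rewrite -ek; exists y; split.
- by move=> j; apply: (tors_sumz HL hs H0).
- exact: yi.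
- by move=> x /(sumz_tors HL Hgr) /cov.
Qed.
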